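(* For any set of rule schemes $\mathcal{R}\subseteq\{N,H,P,F,wF\}$, if a sequent $\Gamma\Rightarrow A$ is valid in every $\mathbf{K}(\mathcal{R})$-Kripke model, then $i\mathbf{STL}(\mathcal{R})\vdash\Gamma\Rightarrow A$.
   Context: Formulas of $\mathcal{L}_\nabla$ are built from variables and constants $1,\top,\bot$ by $\wedge,\vee,\otimes,\to$ and unary $\nabla$. Sequents $\Gamma\Rightarrow A$ have $\Gamma$ a finite sequence; $\nabla\Gamma$ applies $\nabla$ to each member. $\mathbf{STL}$ has axioms $A\Rightarrow A$, $\Rightarrow1$, $\nabla1\Rightarrow1$, $\Gamma\Rightarrow\top$, $\Gamma,\bot,\Sigma\Rightarrow A$ and rules (premises / conclusion): cut: $\Gamma\Rightarrow A$, $\Pi,A,\Sigma\Rightarrow B$ / $\Pi,\Gamma,\Sigma\Rightarrow B$; $L\wedge$: $\Gamma,A,\Sigma\Rightarrow C$ / $\Gamma,A\wedge B,\Sigma\Rightarrow C$ and $\Gamma,B,\Sigma\Rightarrow C$ / $\Gamma,A\wedge B,\Sigma\Rightarrow C$; $R\wedge$: $\Gamma\Rightarrow A$, $\Gamma\Rightarrow B$ / $\Gamma\Rightarrow A\wedge B$; $L\vee$: $\Gamma,A,\Sigma\Rightarrow C$, $\Gamma,B,\Sigma\Rightarrow C$ / $\Gamma,A\vee B,\Sigma\Rightarrow C$; $R\vee$: $\Gamma\Rightarrow A$ / $\Gamma\Rightarrow A\vee B$ and $\Gamma\Rightarrow B$ / $\Gamma\Rightarrow A\vee B$; $L1$: $\Gamma,\Sigma\Rightarrow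 A$ / $\Gamma,1,\Sigma\Rightarrow A$; $L\otimes$: $\Gamma,A,B,\Sigma\Rightarrow C$ / $\Gamma,A\otimes B,\Sigma\Rightarrow C$; $R\otimes$: $\Gamma\Rightarrow A$, $\Sigma\Rightarrow B$ / $\Gamma,\Sigma\Rightarrow A\otimes B$; $(\nabla)$: $A\Rightarrow B$ / $\nabla A\Rightarrow\nabla B$; Oplax: $\nabla A,\nabla B\Rightarrow C$ / $\nabla(A\otimes B)\Rightarrow C$; $L\to$: $\Gamma\Rightarrow A$, $\Pi,B,\Sigma\Rightarrow C$ / $\Pi,\Gamma,\nabla(A\to B),\Sigma\Rightarrow C$; $R\to$: $A,\nabla\Gamma\Rightarrow B$ / $\Gamma\Rightarrow A\to B$. Schemes: $(N)$: $\Gamma\Rightarrow A$ / $\nabla\Gamma\Rightarrow\nabla A$; $(P)$: $\Gamma\Rightarrow\nabla A$ / $\Gamma\Rightarrow A$; $(F)$: $\Gamma\Rightarrow A$ / $\Gamma\Rightarrow\nabla A$; $(wF)$: $\nabla A\Rightarrow\bot$ / $A\Rightarrow\bot$; $(H)$: $\Gamma,A_1\to B_1,\dots,A_n\to B_n\Rightarrow C$ / $\nabla\Gamma,\nabla A_1\to\nabla B_1,\dots,\nabla A_n\to\nabla B_n\Rightarrow\nabla C$. $i\mathbf{STL}(\mathcal{R})$ is $\mathbf{STL}$ plus the schemes in $\mathcal{R}$ plus left weakening, contraction and exchange. A Kripke model is $(W,\le,R,V)$: $(W,\le)$ a poset, $R\subseteq W\times W$ with $(u,v)\in R$, $u'\le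 u$, $v\le v'$ implying $(u',v')\in R$, and $V$ assigning an upset to each variable. Forcing: $w\Vdash p$ iff $w\in V(p)$; $\top$, $1$ always forced; $\bot$ never; $\wedge$ and $\otimes$ both as conjunction; $\vee$ as disjunction; $w\Vdash A\to B$ iff for all $v$ with $(w,v)\in R$, $v\Vdash A$ implies $v\Vdash B$; $w\Vdash\nabla A$ iff there is $v$ with $(v,w)\in R$ and $v\Vdash A$. $\Gamma\Rightarrow A$ is valid if every $w$ forcing all of $\Gamma$ forces $A$. A $\mathbf{K}(\mathcal{R})$-Kripke model satisfies: for $(N)$, there is an order-preserving $\pi:W\to W$ with $(u,v)\in R$ iff $u\le\pi(v)$; for $(H)$, such $\pi$ exists and is an order isomorphism; for $(P)$, $R\subseteq\le$; for $(F)$, $R$ reflexive; for $(wF)$, $R$ serial; for each scheme in $\mathcal{R}$. *)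

(* Defs.v *)
From Stdlib Require Import List.
Import ListNotations.

Inductive form : Type :=
| Var : nat -> form
| One : form
| Top : form
| Bot : form
| And : form -> form -> form
| Or : form -> form -> form
| Tens : form -> form -> form
| Imp : form -> form -> form
| Nabla : form -> form.

Inductive scheme : Type := SN | SH | SP | SF | SwF.

Inductive prv (Rs : scheme -> Prop) : list form -> form -> Prop :=
| ax_id : forall A, prv Rs [A] A
| ax_one : prv Rs [] One
| ax_nabla_one : prv Rs [Nabla One] One
| ax_top : forall G, prv Rs G Top
| ax_bot : forall G S A, prv Rs (G ++ Bot :: S) A
| r_cut : forall G P S A B,
    prv Rs G A -> prv Rs (P ++ A :: S) B -> prv Rs (P ++ G ++ S) B
| r_andL1 : forall G S A B C,
    prv Rs (G ++ A :: S) C -> prv Rs (G ++ And A B :: S) C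
| r_andL2 : forall G S A B C,
    prv Rs (G ++ B :: S) C -> prv Rs (G ++ And A B :: S) C
| r_andR : forall G A B, prv Rs G A -> prv Rs G B -> prv Rs G (And A B)
| r_orL : forall G S A B C,
    prv Rs (G ++ A :: S) C -> prv Rs (G ++ B :: S) C -> prv Rs (G ++ Or A B :: S) C
| r_orR1 : forall G A B, prv Rs G A -> prv Rs G (Or A B)
| r_orR2 : forall G A B, prv Rs G B -> prv Rs G (Or A B)
| r_oneL : forall G S A, prv Rs (G ++ S) A -> prv Rs (G ++ One :: S) A
| r_tensL : forall G S A B C,
    prv Rs (G ++ A :: B :: S) C -> prv Rs (G ++ Tens A B :: S) C
| r_tensR : forall G S A B, prv Rs G A -> prv Rs S B -> prv Rs (G ++ S) (Tens A B)
| r_nabla : forall A B, prv Rs [A] B -> prv Rs [Nabla A] (Nabla B)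
| r_oplax : forall A B C,
    prv Rs [Nabla A; Nabla B] C -> prv Rs [Nabla (Tens A B)] C
| r_impL : forall G P S A B C,
    prv Rs G A -> prv Rs (P ++ B :: S) C ->
    prv Rs (P ++ G ++ Nabla (Imp A B) :: S) C
| r_impR : forall G A B, prv Rs (A :: map Nabla G) B -> prv Rs G (Imp A B)
| s_N : forall G A, Rs SN -> prv Rs G A -> prv Rs (map Nabla G) (Nabla A)
| s_P : forall G A, Rs SP -> prv Rs G (Nabla A) -> prv Rs G A
| s_F : forall G A, Rs SF -> prv Rs G A -> prv Rs G (Nabla A)
| s_wF : forall A, Rs SwF -> prv Rs [Nabla A] Bot -> prv Rs [A] Bot
| s_H : forall G (ps : list (form * form)) C, Rs SH ->
    prv Rs (G ++ map (fun p => Imp (fst p) (snd p)) ps) C ->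
    prv Rs (map Nabla G ++ map (fun p => Imp (Nabla (fst p)) (Nabla (snd p))) ps) (Nabla C)
| r_weak : forall G S A C, prv Rs (G ++ S) C -> prv Rs (G ++ A :: S) C
| r_contr : forall G S A C, prv Rs (G ++ A :: A :: S) C -> prv Rs (G ++ A :: S) C
| r_exch : forall G S A B C, prv Rs (G ++ A :: B :: S) C -> prv Rs (G ++ B :: A :: S) C.

Record KModel : Type := {
  W : Type;
  le : W -> W -> Prop;
  R : W -> W -> Prop;
  V : nat -> W -> Prop;
  le_refl : forall u, le u u;
  le_trans : forall u v w, le u v -> le v w -> le u w;
  le_antisym : forall u v, le u v -> le v u -> u = v;
  R_mono : forall u v u' v', R u v -> le u' u -> le v v' -> R u' v';
  V_up : forall p u v, V p u -> le u v -> V p v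
}.

Fixpoint forces (M : KModel) (w : W M) (A : form) : Prop :=
  match A with
  | Var p => V M p w
  | One => True
  | Top => True
  | Bot => False
  | And B C => forces M w B /\ forces M w C
  | Tens B C => forces M w B /\ forces M w C
  | Or B C => forces M w B \/ forces M w C
  | Imp B C => forall v, R M w v -> forces M v B -> forces M v C
  | Nabla B => exists v, R M v w /\ forces M v B
  end.

Definition valid_in (M : KModel) (G : list form) (A : form) : Prop :=
  forall w : W M, (forall B, In B G -> forces M w B) -> forces M w A.

Definition order_preserving (M : KModel) (pi : W M -> W M) : Prop :=
  forall u v, le M u v -> le M (pi u) (pi v).

Definition order_iso (M : KModel) (pi : W M -> W M) : Prop :=
  exists g : W M -> W M,
    (forall u, g (pi u) = u) /\ (forall u, pi (g u) = u) /\
    order_preserving M pi /\ order_preserving M g.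

Definition R_via (M : KModel) (pi : W M -> W M) : Prop :=
  forall u v, R M u v <-> le M u (pi v).

Definition K_model (Rs : scheme -> Prop) (M : KModel) : Prop :=
  (Rs SN -> exists pi, order_preserving M pi /\ R_via M pi) /\
  (Rs SH -> exists pi, order_preserving M pi /\ R_via M pi /\ order_iso M pi) /\
  (Rs SP -> forall u v, R M u v -> le M u v) /\
  (Rs SF -> forall u, R M u u) /\
  (Rs SwF -> forall u, exists v, R M u v).

(* Main.v *)
Require Import Defs.
From Stdlib Require Import List Permutation Classical FunctionalExtensionality PropExtensionality ProofIrrelevance Cantor Arith Lia.
Import ListNotations.

Lemma prv_perm_gen Rs L L' A : Permutation L L' ->
  forall G, prv Rs (G ++ L) A -> prv Rs (G ++ L') A.
Proof.
  induction 1; intros G HH; auto.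
  - specialize (IHPermutation (G ++ [x])). rewrite <- !app_assoc in IHPermutation.
    simpl in *. auto.
  - apply r_exch. exact HH.
Qed.

Lemma prv_perm Rs L L' A : Permutation L L' -> prv Rs L A -> prv Rs L' A.
Proof. intros. apply (prv_perm_gen _ _ _ _ H []); auto. Qed.

Lemma prv_weak_front Rs K L A : prv Rs L A -> prv Rs (K ++ L) A.
Proof. induction K; simpl; auto. intro H. apply (r_weak Rs [] (K++L) a A). auto. Qed.

Lemma prv_contr_in Rs x L A : In x L -> prv Rs (x :: L) A -> prv Rs L A.
Proof.
  intros Hin H. destruct (in_split _ _ Hin) as [l1 [l2 ->]].
  apply prv_perm with (x :: l1 ++ l2). { apply Permutation_middle. }
  apply (r_contr Rs [] (l1 ++ l2) x A). simpl.
  eapply prv_perm; [|exact H]. apply perm_skip. apply Permutation_sym, Permutation_middle.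
Qed.

Lemma prv_incl Rs L L' A : prv Rs L A -> incl L L' -> prv Rs L' A.
Proof.
  intros H Hi.
  assert (H2 : prv Rs (L ++ L') A).
  { eapply prv_perm; [apply Permutation_app_comm|]. apply prv_weak_front. auto. }
  clear H. induction L; simpl in *; auto.
  apply IHL. { intros y Hy. apply Hi. right. auto. }
  apply prv_contr_in with a. { apply in_or_app. right. apply Hi. left. auto. }
  exact H2.
Qed.

Lemma prv_cut Rs L K A B : prv Rs L A -> prv Rs (A :: K) B -> prv Rs (L ++ K) B.
Proof. intros H1 H2. exact (r_cut Rs L [] K A B H1 H2). Qed.

Lemma cut1 Rs A B C : prv Rs [A] B -> prv Rs [B] C -> prv Rs [A] C.
Proof. intros. exact (prv_cut Rs [A] [] B C H H0). Qed.

Lemma weak1 Rs X L A : prv Rs L A -> prv Rs (X :: L) A.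
Proof. intro. apply (r_weak Rs [] L X A). auto. Qed.

Lemma cut_map Rs (f : form -> form) C L : (forall x, In x L -> prv Rs [f x] x) ->
  forall G, prv Rs (G ++ L) C -> prv Rs (G ++ map f L) C.
Proof.
  induction L; intros Hf G H; simpl; auto.
  pose proof (r_cut Rs [f a] G L a C (Hf a (or_introl eq_refl)) H) as H1.
  replace (G ++ [f a] ++ L) with ((G ++ [f a]) ++ L) in H1 by (rewrite <- app_assoc; auto).
  apply IHL in H1. { rewrite <- app_assoc in H1. exact H1. }
  intros; apply Hf; right; auto.
Qed.

Definition der Rs (T : form -> Prop) A := exists L, (forall x, In x L -> T x) /\ prv Rs L A.

Lemma der_mono Rs (T T' : form -> Prop) A : (forall x, T x -> T' x) -> der Rs T A -> der Rs T' A.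
Proof. intros H [L [HL HP]]. exists L; split; auto. Qed.

Lemma split_list (P Q : form -> Prop) L : (forall x, In x L -> P x \/ Q x) ->
  exists L1 L2, (forall x, In x L1 -> P x) /\ (forall x, In x L2 -> Q x) /\ incl L (L1 ++ L2).
Proof.
  induction L; intros H.
  - exists [], []. repeat split; simpl; intros x Hx; destruct Hx.
  - destruct IHL as [L1 [L2 [H1 [H2 H3]]]]. { intros; apply H; right; auto. }
    destruct (H a (or_introl eq_refl)).
    + exists (a :: L1), L2. split; [|split].
      * intros x [<-|Hx]; auto.
      * auto.
      * intros x [<-|Hx]; simpl; auto.
    + exists L1, (a :: L2). split; [|split].
      * auto.
      * intros x [<-|Hx]; auto.
      * intros x [<-|Hx]; apply in_or_app.
        -- right; left; auto.
        -- apply H3 in Hx. apply in_app_or in Hx. destruct Hx; [left|right;right]; auto.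
Qed.

Lemma split_eq (T : form -> Prop) A L : (forall x, In x L -> T x \/ x = A) ->
  exists L0, (forall x, In x L0 -> T x) /\ incl L (A :: L0).
Proof.
  intros H. destruct (split_list T (fun x => x = A) L H) as [L1 [L2 [H1 [H2 H3]]]].
  exists L1. split; auto. intros x Hx. apply H3 in Hx. apply in_app_or in Hx.
  destruct Hx; [right; auto| left; symmetry; auto].
Qed.

Lemma nabla_list (T : form -> Prop) L : (forall x, In x L -> exists C, x = Nabla C /\ T C) ->
  exists L0, (forall C, In C L0 -> T C) /\ L = map Nabla L0.
Proof.
  induction L; intros H.
  - exists []. split; auto. intros _ [].
  - destruct (H a (or_introl eq_refl)) as [C [-> HC]].
    destruct IHL as [L0 [H1 H2]]. { intros; apply H; right; auto. }
    exists (C :: L0). split. { intros x [<-|]; auto. } simpl; f_equal; auto.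
Qed.

Lemma der_cut Rs T A d : der Rs (fun y => T y \/ y = A) d -> der Rs T A -> der Rs T d.
Proof.
  intros [L1 [H1 P1]] [L2 [H2 P2]].
  destruct (split_eq T A L1 H1) as [L0 [H0 Hi]].
  exists (L2 ++ L0). split.
  - intros x Hx. apply in_app_or in Hx. destruct Hx; auto.
  - apply prv_cut with A; auto. eapply prv_incl; eauto.
Qed.

Lemma der_orL Rs T A B C : T (Or A B) -> der Rs (fun y => T y \/ y = A) C ->
  der Rs (fun y => T y \/ y = B) C -> der Rs T C.
Proof.
  intros HT [L1 [H1 P1]] [L2 [H2 P2]].
  destruct (split_eq T A L1 H1) as [K1 [HK1 I1]].
  destruct (split_eq T B L2 H2) as [K2 [HK2 I2]].
  exists (Or A B :: K1 ++ K2). split.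
  - intros x [<-|Hx]; auto. apply in_app_or in Hx; destruct Hx; auto.
  - apply (r_orL Rs [] (K1 ++ K2) A B C); simpl.
    + apply prv_incl with L1; auto. intros x Hx. apply I1 in Hx. destruct Hx as [<-|Hx]; [left; auto|].
      right. apply in_or_app; auto.
    + apply prv_incl with L2; auto. intros x Hx. apply I2 in Hx. destruct Hx as [<-|Hx]; [left; auto|].
      right. apply in_or_app; auto.
Qed.

Definition ptheory Rs (T : form -> Prop) :=
  (forall A, der Rs T A -> T A) /\ ~ T Bot /\ (forall A B, T (Or A B) -> T A \/ T B).

Fixpoint enc (A : form) : nat :=
  match A with
  | Var n => to_nat (0, n)
  | One => to_nat (1, 0)
  | Top => to_nat (2, 0)
  | Bot => to_nat (3, 0)
  | And a b => to_nat (4, to_nat (enc a, enc b))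
  | Or a b => to_nat (5, to_nat (enc a, enc b))
  | Tens a b => to_nat (6, to_nat (enc a, enc b))
  | Imp a b => to_nat (7, to_nat (enc a, enc b))
  | Nabla a => to_nat (8, enc a)
  end.

Lemma to_nat_inj p q : to_nat p = to_nat q -> p = q.
Proof. intro H. rewrite <- (cancel_of_to p), <- (cancel_of_to q), H. auto. Qed.

Lemma enc_inj : forall A B, enc A = enc B -> A = B.
Proof.
  induction A; destruct B; intro H; cbn [enc] in H; apply to_nat_inj in H; try discriminate;
    try reflexivity; apply (f_equal snd) in H; cbn [snd] in H;
    try (apply to_nat_inj in H;
         pose proof (f_equal fst H) as H1; pose proof (f_equal snd H) as H2;
         cbn [fst snd] in H1, H2);
    f_equal; auto.
Qed.

Definition okI Rs (I T : form -> Prop) := forall d, I d -> ~ der Rs T d.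

Fixpoint chain Rs (I S0 : form -> Prop) (n : nat) : form -> Prop :=
  match n with
  | 0 => S0
  | S n' => fun x => chain Rs I S0 n' x \/
                 (enc x = n' /\ okI Rs I (fun y => chain Rs I S0 n' y \/ y = x))
  end.

Lemma chain_mono Rs I S0 n m x : n <= m -> chain Rs I S0 n x -> chain Rs I S0 m x.
Proof. induction 1; simpl; auto. Qed.

Lemma chain_ok Rs I S0 n : okI Rs I S0 -> okI Rs I (chain Rs I S0 n).
Proof.
  intro H0. induction n; simpl; auto.
  destruct (classic (exists x, enc x = n /\ okI Rs I (fun y => chain Rs I S0 n y \/ y = x)))
    as [[x0 [He Hok]]|Hno].
  - intros d Hd Hder. apply (Hok d Hd). revert Hder. apply der_mono.
    intros y [Hy|[Hy _]]; auto. right. apply enc_inj. congruence.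
  - intros d Hd Hder. apply (IHn d Hd). revert Hder. apply der_mono.
    intros y [Hy|[Hy Hok]]; auto. exfalso. apply Hno. eauto.
Qed.

Lemma list_bound (C : nat -> form -> Prop) L :
  (forall n m x, n <= m -> C n x -> C m x) ->
  (forall x, In x L -> exists n, C n x) -> exists N, forall x, In x L -> C N x.
Proof.
  intros Hm. induction L; intros H.
  - exists 0. intros x [].
  - destruct (H a (or_introl eq_refl)) as [n Hn].
    destruct IHL as [N HN]. { intros; apply H; right; auto. }
    exists (max n N). intros x [<-|Hx].
    + apply Hm with n; auto. lia.
    + apply Hm with N; auto. lia.
Qed.

Lemma lindenbaum Rs (S0 I : form -> Prop) :
  (forall a b, I a -> I b -> I (Or a b)) -> (exists d, I d) -> okI Rs I S0 ->
  exists P, (forall x, S0 x -> P x) /\ ptheory Rs P /\ (forall d, I d -> ~ P d).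
Proof.
  intros HIor [d0 Hd0] Hok.
  set (P := fun x => exists n, chain Rs I S0 n x).
  assert (okP : okI Rs I P).
  { intros d Hd [L [HL HPL]].
    destruct (list_bound (chain Rs I S0) L) as [N HN].
    { intros; eapply chain_mono; eauto. } { exact HL. }
    apply (chain_ok Rs I S0 N Hok d Hd). exists L; auto. }
  assert (maxP : forall phi, okI Rs I (fun y => P y \/ y = phi) -> P phi).
  { intros phi Hphi. exists (S (enc phi)). simpl. right. split; auto.
    intros d Hd Hder. apply (Hphi d Hd). revert Hder. apply der_mono.
    intros y [Hy|Hy]; [left; exists (enc phi); auto|right; auto]. }
  assert (notok : forall phi, ~ P phi -> exists d, I d /\ der Rs (fun y => P y \/ y = phi) d).
  { intros phi Hn. apply NNPP. intro H. apply Hn, maxP. intros d Hd Hder. apply H. eauto. }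
  exists P. split; [|split; [split; [|split]|]].
  - intros x Hx. exists 0. exact Hx.
  - intros A HA. apply maxP. intros d Hd Hder. apply (okP d Hd). eapply der_cut; eauto.
  - intro HB. apply (okP d0 Hd0). exists [Bot]. split.
    + intros x [<-|[]]; auto.
    + exact (ax_bot Rs [] [] d0).
  - intros A B HAB. destruct (classic (P A)) as [|HA]; auto.
    destruct (classic (P B)) as [|HB]; auto. exfalso.
    destruct (notok A HA) as [d1 [Hd1 [L1 [H1 P1]]]].
    destruct (notok B HB) as [d2 [Hd2 [L2 [H2 P2]]]].
    apply (okP (Or d1 d2) (HIor _ _ Hd1 Hd2)).
    apply der_orL with A B; auto.
    + exists L1. split; auto. apply r_orR1; auto.
    + exists L2. split; auto. apply r_orR2; auto.
  - intros d Hd HPd. apply (okP d Hd). exists [d]. split.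
    + intros x [<-|[]]; auto.
    + apply ax_id.
Qed.

Lemma counit Rs X : prv Rs [Nabla (Imp One X)] X.
Proof. exact (r_impL Rs [] [] [] One X X (ax_one Rs) (ax_id Rs X)). Qed.

Lemma nabla_or Rs A B : prv Rs [Nabla (Or A B)] (Or (Nabla A) (Nabla B)).
Proof.
  apply cut1 with (Nabla (Imp One (Or (Nabla A) (Nabla B)))); [|apply counit].
  apply r_nabla. apply (r_orL Rs [] [] A B).
  - apply (r_impR Rs [A]). simpl. apply (r_oneL Rs [] [Nabla A]). simpl.
    apply r_orR1, ax_id.
  - apply (r_impR Rs [B]). simpl. apply (r_oneL Rs [] [Nabla B]). simpl.
    apply r_orR2, ax_id.
Qed.

Lemma nabla_bot Rs : prv Rs [Nabla Bot] Bot.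
Proof.
  apply cut1 with (Nabla (Imp One Bot)); [|apply counit].
  apply r_nabla. exact (ax_bot Rs [] [] _).
Qed.

Lemma ptheory_close Rs T L A : ptheory Rs T -> (forall x, In x L -> T x) -> prv Rs L A -> T A.
Proof. intros [H _] HL HP. apply H. exists L; auto. Qed.

Lemma ptheory_close1 Rs T B A : ptheory Rs T -> T B -> prv Rs [B] A -> T A.
Proof. intros H HB HP. apply (ptheory_close Rs T [B]); auto. intros x [<-|[]]; auto. Qed.

Definition wrld Rs := {P : form -> Prop | ptheory Rs P}.

Definition cle Rs (u v : wrld Rs) := forall A, proj1_sig u A -> proj1_sig v A.
Definition cR Rs (u v : wrld Rs) := forall A, proj1_sig u A -> proj1_sig v (Nabla A).
Definition cV Rs (p : nat) (u : wrld Rs) := proj1_sig u (Var p).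

Lemma wrld_eq Rs (u v : wrld Rs) : (forall A, proj1_sig u A <-> proj1_sig v A) -> u = v.
Proof.
  destruct u as [u Hu], v as [v Hv]; simpl; intro H.
  assert (u = v). { apply functional_extensionality; intro A; apply propositional_extensionality; auto. }
  subst. f_equal. apply proof_irrelevance.
Qed.

Lemma cle_refl Rs u : cle Rs u u.
Proof. intros A H; auto. Qed.
Lemma cle_trans Rs u v w : cle Rs u v -> cle Rs v w -> cle Rs u w.
Proof. unfold cle; auto. Qed.
Lemma cle_antisym Rs u v : cle Rs u v -> cle Rs v u -> u = v.
Proof. intros. apply wrld_eq. split; auto. Qed.
Lemma cR_mono Rs u v u' v' : cR Rs u v -> cle Rs u' u -> cle Rs v v' -> cR Rs u' v'.
Proof. unfold cR, cle; auto. Qed.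
Lemma cV_up Rs p u v : cV Rs p u -> cle Rs u v -> cV Rs p v.
Proof. unfold cV, cle; auto. Qed.

Definition CM Rs : KModel :=
  Build_KModel (wrld Rs) (cle Rs) (cR Rs) (cV Rs) (cle_refl Rs) (cle_trans Rs)
    (cle_antisym Rs) (cR_mono Rs) (cV_up Rs).

Lemma truth Rs : forall A (w : wrld Rs), forces (CM Rs) w A <-> proj1_sig w A.
Proof.
  induction A; intros [w Hw]; simpl.
  - unfold cV; simpl; tauto.
  - split; auto. intros _. apply (ptheory_close Rs w []); auto. intros _ []. apply ax_one.
  - split; auto. intros _. apply (ptheory_close Rs w []); auto. intros _ []. apply ax_top.
  - split; [tauto|]. destruct Hw as [_ [H _]]. auto.
  - rewrite (IHA1 (exist _ w Hw)), (IHA2 (exist _ w Hw)); simpl. split.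
    + intros [H1 H2]. apply (ptheory_close Rs w [A1; A2]); auto.
      { intros x [<-|[<-|[]]]; auto. }
      apply r_andR. { apply (r_weak Rs [A1] [] A2). apply ax_id. }
      apply weak1. apply ax_id.
    + intros H. split.
      * apply (ptheory_close1 Rs w _ _ Hw H). exact (r_andL1 Rs [] [] A1 A2 A1 (ax_id Rs A1)).
      * apply (ptheory_close1 Rs w _ _ Hw H). exact (r_andL2 Rs [] [] A1 A2 A2 (ax_id Rs A2)).
  - rewrite (IHA1 (exist _ w Hw)), (IHA2 (exist _ w Hw)); simpl. split.
    + intros [H|H]; apply (ptheory_close1 Rs w _ _ Hw H).
      * apply r_orR1, ax_id.
      * apply r_orR2, ax_id.
    + destruct Hw as [_ [_ H]]. auto.
  - rewrite (IHA1 (exist _ w Hw)), (IHA2 (exist _ w Hw)); simpl. split.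
    + intros [H1 H2]. apply (ptheory_close Rs w [A1; A2]); auto.
      { intros x [<-|[<-|[]]]; auto. }
      exact (r_tensR Rs [A1] [A2] A1 A2 (ax_id Rs A1) (ax_id Rs A2)).
    + intros H. split.
      * apply (ptheory_close1 Rs w _ _ Hw H). apply (r_tensL Rs [] []). simpl.
        apply (r_weak Rs [A1] [] A2). apply ax_id.
      * apply (ptheory_close1 Rs w _ _ Hw H). apply (r_tensL Rs [] []). simpl.
        apply weak1, ax_id.
  -
    split.
    + intros H. apply NNPP. intro Hn.
      destruct (lindenbaum Rs (fun x => x = A1 \/ exists C, x = Nabla C /\ w C)
                  (fun d => prv Rs [d] A2)) as [P [HS [HP HI]]].
      * intros a b Ha Hb. exact (r_orL Rs [] [] a b A2 Ha Hb).
      * exists A2. apply ax_id.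
      * intros d Hd [L [HL HPL]].
        destruct (split_list (fun x => x = A1) (fun x => exists C, x = Nabla C /\ w C) L HL)
          as [L1 [L2 [H1 [H2 H3]]]].
        destruct (nabla_list w L2 H2) as [L0 [H4 ->]].
        apply Hn. apply (ptheory_close Rs w L0); auto.
        apply r_impR. apply prv_incl with (L ++ []).
        { apply prv_cut with d; auto. }
        rewrite app_nil_r. intros x Hx. apply H3 in Hx. apply in_app_or in Hx.
        destruct Hx as [Hx|Hx]; [left; symmetry; auto| right; auto].
      * assert (Hv : cR Rs (exist _ w Hw) (exist _ P HP)).
        { intros C HC. apply HS. right. eauto. }
        specialize (H (exist _ P HP) Hv).
        rewrite (IHA1 (exist _ P HP)), (IHA2 (exist _ P HP)) in H. simpl in H.
        apply (HI A2). { apply ax_id. } apply H. apply HS. left; auto.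
    + intros H [v Hv] HR. rewrite (IHA1 (exist _ v Hv)), (IHA2 (exist _ v Hv)). simpl.
      intros Ha. apply (ptheory_close Rs v [A1; Nabla (Imp A1 A2)]); auto.
      { intros x [<-|[<-|[]]]; auto. apply HR. exact H. }
      exact (r_impL Rs [A1] [] [] A1 A2 A2 (ax_id Rs A1) (ax_id Rs A2)).
  -
    split.
    + intros [[v Hv] [HR Hf]]. rewrite (IHA (exist _ v Hv)) in Hf. simpl in Hf.
      apply HR. exact Hf.
    + intros H.
      destruct (lindenbaum Rs (fun x => x = A) (fun C => ~ w (Nabla C))) as [P [HS [HP HI]]].
      * intros a b Ha Hb Hab. pose proof (ptheory_close1 Rs w _ _ Hw Hab (nabla_or Rs a b)) as H'.
        destruct Hw as [_ [_ Hpr]]. destruct (Hpr _ _ H'); auto.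
      * exists Bot. intro HB. pose proof (ptheory_close1 Rs w _ _ Hw HB (nabla_bot Rs)) as H'.
        destruct Hw as [_ [Hb _]]. auto.
      * intros d Hd [L [HL HPL]]. apply Hd.
        apply (ptheory_close1 Rs w _ _ Hw H). apply r_nabla.
        apply prv_incl with L; auto. intros x Hx. rewrite (HL x Hx). left; auto.
      * exists (exist _ P HP). split.
        -- intros C HC. simpl. apply NNPP. intro Hn. apply (HI C Hn HC).
        -- rewrite (IHA (exist _ P HP)). simpl. apply HS. auto.
Qed.

Lemma N_rule Rs L A : (Rs SN \/ Rs SH) -> prv Rs L A -> prv Rs (map Nabla L) (Nabla A).
Proof.
  intros [H|H] HP.
  - apply s_N; auto.
  - pose proof (s_H Rs L [] A H) as X. simpl in X. rewrite !app_nil_r in X. apply X.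
    try rewrite app_nil_r. auto.
Qed.

Lemma pi_theory Rs T : (Rs SN \/ Rs SH) -> ptheory Rs T -> ptheory Rs (fun A => T (Nabla A)).
Proof.
  intros HN HT. split; [|split].
  - intros A [L [HL HP]]. apply (ptheory_close Rs T (map Nabla L)); auto.
    + intros x Hx. apply in_map_iff in Hx. destruct Hx as [y [<- Hy]]. auto.
    + apply N_rule; auto.
  - intro HB. pose proof (ptheory_close1 Rs T _ _ HT HB (nabla_bot Rs)). destruct HT as [_ [Hb _]]; auto.
  - intros A B H. pose proof (ptheory_close1 Rs T _ _ HT H (nabla_or Rs A B)).
    destruct HT as [_ [_ Hp]]; auto.
Qed.

Definition cpi Rs (HN : Rs SN \/ Rs SH) (v : wrld Rs) : wrld Rs :=
  exist _ (fun A => proj1_sig v (Nabla A)) (pi_theory Rs _ HN (proj2_sig v)).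

Lemma h1 Rs C : Rs SH -> prv Rs [C] (Nabla (Imp One C)).
Proof.
  intro HH. apply cut1 with (Imp (Nabla One) (Nabla C)).
  - apply (r_impR Rs [C]). simpl. apply weak1, ax_id.
  - exact (s_H Rs [] [(One, C)] (Imp One C) HH (ax_id Rs _)).
Qed.

Lemma h3 Rs A : Rs SH -> prv Rs [Imp One (Nabla A)] A.
Proof.
  intro HH. apply cut1 with (Imp (Nabla One) (Nabla A)).
  - apply (r_impR Rs [Imp One (Nabla A)]). simpl. apply weak1, counit.
  - apply cut1 with (Nabla (Imp One A)); [|apply counit].
    exact (s_H Rs [] [(One, A)] (Imp One A) HH (ax_id Rs _)).
Qed.

Lemma h4 Rs A : prv Rs [A] (Imp One (Nabla A)).
Proof. apply (r_impR Rs [A]). simpl. apply (r_oneL Rs [] [Nabla A]). apply ax_id. Qed.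

Lemma box_rule Rs L C : prv Rs L C -> prv Rs (map (Imp One) L) (Imp One C).
Proof.
  intro H. apply r_impR. apply weak1. rewrite map_map.
  apply (cut_map Rs (fun x => Nabla (Imp One x)) C L (fun x _ => counit Rs x) []). auto.
Qed.

Lemma hor Rs A B : Rs SH -> prv Rs [Imp One (Or A B)] (Or (Imp One A) (Imp One B)).
Proof.
  intro HH. apply cut1 with (Imp One (Nabla (Or (Imp One A) (Imp One B)))); [|apply h3; auto].
  apply (box_rule Rs [Or A B]). apply (r_orL Rs [] [] A B).
  - apply cut1 with (Nabla (Imp One A)); [apply h1; auto|]. apply r_nabla, r_orR1, ax_id.
  - apply cut1 with (Nabla (Imp One B)); [apply h1; auto|]. apply r_nabla, r_orR2, ax_id.
Qed.

Lemma hbot Rs : Rs SH -> prv Rs [Imp One Bot] Bot.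
Proof.
  intro HH. apply cut1 with (Imp One (Nabla Bot)); [|apply h3; auto].
  apply (box_rule Rs [Bot]). exact (ax_bot Rs [] [] _).
Qed.

Lemma g_theory Rs T : Rs SH -> ptheory Rs T -> ptheory Rs (fun A => T (Imp One A)).
Proof.
  intros HH HT. split; [|split].
  - intros A [L [HL HP]]. apply (ptheory_close Rs T (map (Imp One) L)); auto.
    + intros x Hx. apply in_map_iff in Hx. destruct Hx as [y [<- Hy]]. auto.
    + apply box_rule; auto.
  - intro HB. pose proof (ptheory_close1 Rs T _ _ HT HB (hbot Rs HH)). destruct HT as [_ [Hb _]]; auto.
  - intros A B H. pose proof (ptheory_close1 Rs T _ _ HT H (hor Rs A B HH)).
    destruct HT as [_ [_ Hp]]; auto.
Qed.

Definition cg Rs (HH : Rs SH) (v : wrld Rs) : wrld Rs :=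
  exist _ (fun A => proj1_sig v (Imp One A)) (g_theory Rs _ HH (proj2_sig v)).

Definition conj (L : list form) := fold_right Tens One L.

Lemma prv_conj Rs L : prv Rs L (conj L).
Proof.
  induction L; simpl. { apply ax_one. }
  exact (r_tensR Rs [a] L a (conj L) (ax_id Rs a) IHL).
Qed.

Lemma nabla_conj Rs D : forall L0 G, prv Rs (G ++ map Nabla L0) D -> prv Rs (G ++ [Nabla (conj L0)]) D.
Proof.
  induction L0; intros G H; simpl in *.
  - apply (r_weak Rs G [] (Nabla One)). rewrite app_nil_r in *. auto.
  - specialize (IHL0 (G ++ [Nabla a])). rewrite <- app_assoc in IHL0. simpl in IHL0.
    specialize (IHL0 H). rewrite <- app_assoc in IHL0. simpl in IHL0.
    pose proof (r_tensL Rs G [] _ _ D IHL0) as H1.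
    pose proof (r_oplax Rs a (conj L0) _
                 (r_tensR Rs [Nabla a] [Nabla (conj L0)] _ _ (ax_id Rs _) (ax_id Rs _))) as H2.
    exact (r_cut Rs _ G [] _ D H2 H1).
Qed.

Lemma cm_K Rs : K_model Rs (CM Rs).
Proof.
  split; [|split; [|split; [|split]]].
  - intro HN. exists (cpi Rs (or_introl HN)). split.
    + intros u v H A. simpl. apply H.
    + intros u v. simpl. unfold cR, cle. simpl. tauto.
  - intro HH. exists (cpi Rs (or_intror HH)). split; [|split].
    + intros u v H A. simpl. apply H.
    + intros u v. simpl. unfold cR, cle. simpl. tauto.
    + exists (cg Rs HH). split; [|split; [|split]].
      * intro u. apply wrld_eq. intro A. simpl. split; intro H.
        -- apply (ptheory_close1 Rs _ _ _ (proj2_sig u) H). apply counit.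
        -- apply (ptheory_close1 Rs _ _ _ (proj2_sig u) H). apply h1; auto.
      * intro u. apply wrld_eq. intro A. simpl. split; intro H.
        -- apply (ptheory_close1 Rs _ _ _ (proj2_sig u) H). apply h3; auto.
        -- apply (ptheory_close1 Rs _ _ _ (proj2_sig u) H). apply h4.
      * intros u v H A. simpl. apply H.
      * intros u v H A. simpl. apply H.
  - intros HP u v H A HA. simpl in *. apply (ptheory_close1 Rs _ _ _ (proj2_sig v) (H A HA)).
    apply s_P; auto. apply ax_id.
  - intros HF u A HA. apply (ptheory_close1 Rs _ _ _ (proj2_sig u) HA).
    apply s_F; auto. apply ax_id.
  - intros HW [u Hu]. simpl.
    destruct (lindenbaum Rs (fun x => exists C, x = Nabla C /\ u C) (fun d => prv Rs [d] Bot))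
      as [P [HS [HP HI]]].
    + intros a b Ha Hb. exact (r_orL Rs [] [] a b Bot Ha Hb).
    + exists Bot. exact (ax_bot Rs [] [] _).
    + intros d Hd [L [HL HPL]].
      destruct (nabla_list u L HL) as [L0 [H0 ->]].
      pose proof (prv_cut Rs _ [] _ _ HPL Hd) as H1'. rewrite app_nil_r in H1'.
      pose proof (nabla_conj Rs Bot L0 [] H1') as H1. simpl in H1.
      apply s_wF in H1; auto.
      pose proof (ptheory_close Rs u L0 _ Hu H0 (prv_conj Rs L0)) as H2.
      pose proof (ptheory_close1 Rs u _ _ Hu H2 H1). destruct Hu as [_ [Hb _]]. auto.
    + exists (exist _ P HP). intros C HC. simpl. apply HS. eauto.
Qed.

Theorem theorem8p8 (Rs : scheme -> Prop) (G : list form) (A : form) :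
  (forall M : KModel, K_model Rs M -> valid_in M G A) -> prv Rs G A.
Proof.
  intros Hval. apply NNPP. intro Hn.
  destruct (lindenbaum Rs (fun x => In x G) (fun d => prv Rs [d] A)) as [P [HS [HP HI]]].
  - intros a b Ha Hb. exact (r_orL Rs [] [] a b A Ha Hb).
  - exists A. apply ax_id.
  - intros d Hd [L [HL HPL]]. apply Hn. apply prv_incl with (L ++ []).
    + apply prv_cut with d; auto.
    + rewrite app_nil_r. intros x Hx. auto.
  - pose proof (Hval (CM Rs) (cm_K Rs) (exist _ P HP)) as H.
    apply (HI A (ax_id Rs A)).
    apply (truth Rs A (exist _ P HP)). apply H.
    intros B HB. apply (truth Rs B (exist _ P HP)). simpl. auto.
Qed.
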